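(* Let $\mathcal{N}=(N,M_0)$ be a two-level PT-net system with transitions partitioned into low-level transitions $L$ and high-level transitions $H$. Then $\mathcal{N}$ has the property BNDC if and only if it has the property SBNDC.
   Context: A PT-net is $N=(P,T,F)$ with $P,T$ finite disjoint sets (places, transitions) and $F:(P\times T)\cup(T\times P)\to\mathbb{N}$. A marking is $M:P\to\mathbb{N}$; $t$ is enabled at $M$ (written $M[t\rangle$) iff $M(p)\ge F(p,t)$ for all $p$, and firing it yields $M'$ with $M'(p)=M(p)+F(t,p)-F(p,t)$ (written $M[t\rangle M'$); this extends to sequences. A PT-net system is $(N,M_0)$; reachable markings are those $M$ with $M_0[s\rangle M$ for some $s\in T^*$. For $T'\subseteq T$, $\mathcal{N}\setminus T'$ is obtained by deleting the transitions of $T'$ (same places, same initial marking). For PT-net systems $\mathcal{N}_1=(P_1,T_1,F_1,M_{1,0})$, $\mathcal{N}_2=(P_2,T_2,F_2,M_{2,0})$ with $P_1\cap P_2=\emptyset$, the composition $\mathcal{N}_1|\mathcal{N}_2$ has places $P_1\cup P_2$, transitions $T_1\cup T_2$ (a transition in $T_1\cap T_2$ is a single synchronized transition), flow $F(p,t)=F_i(p,t)$, $F(t,p)=F_i(t,p)$ for $p\in P_i$, $t\in T_i$ (and $0$ otherwise), and initial marking the union of $M_{1,0},M_{2,0}$. A two-level net system has its transition set partitioned into low-level $L$ and high-level $H$; a high-level net system has only high-level transitions. Transitions in $L$ are observable and those in $H$ unobservable. Two such systems are weakly bisimilar ($\approx$) if there is a relation $R$ between their reachable markings containing the pair of initial markings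 such that, for $(M_1,M_1')\in R$ (and symmetrically for $R^{-1}$): if $M_1[l\rangle M_2$ with $l$ observable then $M_1'$ can reach, by a sequence of unobservable transitions, then $l$, then unobservable transitions, some $M_2'$ with $(M_2,M_2')\in R$; if $M_1[h\rangle M_2$ with $h$ unobservable then $M_1'$ reaches by unobservable transitions some $M_2'$ with $(M_2,M_2')\in R$. BNDC: for every high-level net system $\mathcal{N}'$ (places disjoint from those of $\mathcal{N}$) whose transition set $H'$ does not intersect $L$, $\mathcal{N}\setminus H\approx(\mathcal{N}|\mathcal{N}')\setminus(H\setminus H')$. SBNDC: for every reachable marking $M_1$ of $\mathcal{N}$ and every $h\in H$, $M_1[h\rangle M_2$ implies that $(N\setminus H,M_1)$ and $(N\setminus H,M_2)$ are weakly bisimilar (all their transitions being low-level, hence observable). *)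

(* Defs.v *)
From mathcomp Require Import all_boot.
Set Implicit Arguments. Unset Strict Implicit. Unset Printing Implicit Defensive.

Section Nets.
Variable Tr : eqType.

(* A PT-net: finite set of transitions [trans] (a list of names, only
   membership matters), places = the finite type P, flow F(p,t) = pre t p,
   F(t,p) = post t p (values for t outside [trans] are irrelevant). *)
Record net (P : finType) := Net {
  trans : seq Tr;
  pre  : Tr -> P -> nat;
  post : Tr -> P -> nat }.

Definition marking (P : finType) := {ffun P -> nat}.

Variable P : finType.

Definition enabled (N : net P) (M : marking P) (t : Tr) : bool :=
  (t \in trans N) && [forall p, pre N t p <= M p].

Definition fire (N : net P) (M : marking P) (t : Tr) : marking P :=
  [ffun p => M p - pre N t p + post N t p].

Definition step (N : net P) (M : marking P) (t : Tr) (M' : marking P) : Prop :=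
  enabled N M t /\ M' = fire N M t.

Fixpoint fires (N : net P) (M : marking P) (s : seq Tr) (M' : marking P)
  : Prop :=
  match s with
  | [::] => M' = M
  | t :: s' => exists M1, step N M t M1 /\ fires N M1 s' M'
  end.

Definition reachable (N : net P) (M0 M : marking P) : Prop :=
  exists s, fires N M0 s M.

Definition tau_steps (obs : pred Tr) (N : net P) (M M' : marking P) : Prop :=
  exists s, all (predC obs) s /\ fires N M s M'.

Definition restrict (N : net P) (T' : seq Tr) : net P :=
  Net [seq t <- trans N | t \notin T'] (pre N) (post N).

End Nets.

Definition wsim (Tr : eqType) (P1 P2 : finType) (obs : pred Tr) (N1 : net Tr P1) (N2 : net Tr P2)
  (R : marking P1 -> marking P2 -> Prop) : Prop :=
  forall M1 M1', R M1 M1' -> forall t M2, step N1 M1 t M2 ->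
    (obs t -> exists A B M2', tau_steps obs N2 M1' A /\ step N2 A t B /\
                              tau_steps obs N2 B M2' /\ R M2 M2') /\
    (~~ obs t -> exists M2', tau_steps obs N2 M1' M2' /\ R M2 M2').

Section Compose.
Variable Tr : eqType.
Variables P1 P2 : finType.

(* composition N1 | N2; the place sets are made disjoint by the sum type;
   shared transition names are synchronised *)
Definition compose (N1 : net Tr P1) (N2 : net Tr P2) : net Tr (P1 + P2)%type :=
  Net (trans N1 ++ trans N2)
    (fun t p => match p with
                | inl p1 => if t \in trans N1 then pre N1 t p1 else 0
                | inr p2 => if t \in trans N2 then pre N2 t p2 else 0 end)
    (fun t p => match p with
                | inl p1 => if t \in trans N1 then post N1 t p1 else 0
                | inr p2 => if t \in trans N2 then post N2 t p2 else 0 end).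

Definition compose_marking (M1 : marking P1) (M2 : marking P2)
  : marking (P1 + P2)%type :=
  [ffun p => match p with inl p1 => M1 p1 | inr p2 => M2 p2 end].

Definition wbisim (obs : pred Tr) (N1 : net Tr P1) (m1 : marking P1)
  (N2 : net Tr P2) (m2 : marking P2) : Prop :=
  exists R : marking P1 -> marking P2 -> Prop,
    R m1 m2 /\
    (forall a b, R a b -> reachable N1 m1 a /\ reachable N2 m2 b) /\
    wsim obs N1 N2 R /\ wsim obs N2 N1 (fun b a => R a b).
End Compose.

Definition two_level (Tr : eqType) (P : finType) (N : net Tr P) (L H : seq Tr)
  : Prop :=
  (forall t, (t \in trans N) = (t \in L) || (t \in H)) /\
  (forall t, t \in L -> t \notin H).

(* BNDC: for every high-level net system (N', M0') (places disjoint, via the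
   sum type; transitions H' disjoint from L),
   N \ H  ~~  (N | N') \ (H \ H'). *)
Definition BNDC (Tr : eqType) (P : finType) (N : net Tr P) (M0 : marking P)
  (L H : seq Tr) : Prop :=
  forall (P' : finType) (N' : net Tr P') (M0' : marking P'),
    (forall t, t \in trans N' -> t \notin L) ->
    wbisim (mem L) (restrict N H) M0
      (restrict (compose N N') [seq t <- H | t \notin trans N'])
      (compose_marking M0 M0').

Definition SBNDC (Tr : eqType) (P : finType) (N : net Tr P) (M0 : marking P)
  (L H : seq Tr) : Prop :=
  forall M1, reachable N M0 M1 -> forall h M2, h \in H -> step N M1 h M2 ->
    wbisim (mem L) (restrict N H) M1 (restrict N H) M2.

(* Main.v *)
Require Import Defs.
From mathcomp Require Import all_boot.
Set Implicit Arguments. Unset Strict Implicit. Unset Printing Implicit Defensive.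

Lemma fires_cat (Tr : eqType) (P : finType) (N : net Tr P) M s M' s' M'' :
  fires N M s M' -> fires N M' s' M'' -> fires N M (s ++ s') M''.
Proof.
elim: s M => [|t s IH] M /=; first by move=> ->.
by move=> [M1 [H1 H2]] H3; exists M1; split=> //; apply: IH H2 H3.
Qed.

Lemma fires_det (Tr : eqType) (P : finType) (N : net Tr P) M s M' M'' :
  fires N M s M' -> fires N M s M'' -> M' = M''.
Proof.
elim: s M => [|t s IH] M /=; first by move=> -> ->.
move=> [M1 [[_ E1] H1]] [M2 [[_ E2] H2]]; subst M1 M2; exact: IH H1 H2.
Qed.

Lemma wsim_iff (Tr : eqType) (P1 P2 : finType) obs (N1 : net Tr P1) (N2 : net Tr P2) R R' :
  (forall a b, R a b <-> R' a b) -> wsim obs N1 N2 R -> wsim obs N1 N2 R'.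
Proof.
move=> E W a b /E Rab t M2 st; have [W1 W2] := W a b Rab t M2 st.
split.
  move=> o; have [A [B [M2' [h1 [h2 [h3 h4]]]]]] := W1 o.
  by exists A, B, M2'; split; [|split; [|split]] => //; apply/E.
by move=> o; have [M2' [h1 h2]] := W2 o; exists M2'; split => //; apply/E.
Qed.

Lemma reach_step (Tr : eqType) (P : finType) (N : net Tr P) m a t b :
  reachable N m a -> step N a t b -> reachable N m b.
Proof.
move=> [s fs] st; exists (s ++ [:: t]); apply: fires_cat fs _.
by exists b; split.
Qed.

Lemma reach_tau (Tr : eqType) (P : finType) obs (N : net Tr P) m a b :
  reachable N m a -> tau_steps obs N a b -> reachable N m b.
Proof. by move=> [s fs] [s' [_ fs']]; exists (s ++ s'); apply: fires_cat fs fs'. Qed.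

Lemma wsim_reach (Tr : eqType) (P1 P2 : finType) obs (N1 : net Tr P1) (N2 : net Tr P2) R m1 m2 :
  wsim obs N1 N2 R ->
  wsim obs N1 N2 (fun a b => R a b /\ reachable N1 m1 a /\ reachable N2 m2 b).
Proof.
move=> W a b [Rab [ra rb]] t M2 st; have [W1 W2] := W a b Rab t M2 st.
have rM2 := reach_step ra st.
split.
  move=> o; have [A [B [M2' [h1 [h2 [h3 h4]]]]]] := W1 o.
  exists A, B, M2'; split; [|split; [|split]] => //.
  split=> //; split=> //; apply: reach_tau h3; apply: reach_step h2.
  exact: reach_tau h1.
move=> o; have [M2' [h1 h2]] := W2 o; exists M2'; split => //.
by split=> //; split=> //; apply: reach_tau h1.
Qed.

Lemma mk_wbisim (Tr : eqType) (P1 P2 : finType) obs (N1 : net Tr P1) (N2 : net Tr P2) R m1 m2 :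
  R m1 m2 -> wsim obs N1 N2 R -> wsim obs N2 N1 (fun b a => R a b) ->
  wbisim obs N1 m1 N2 m2.
Proof.
move=> R0 W1 W2.
exists (fun a b => R a b /\ reachable N1 m1 a /\ reachable N2 m2 b).
split; first by split=> //; split; exists [::].
split; first by move=> a b [_ []].
split; first exact: wsim_reach.
apply: (@wsim_iff _ _ _ _ _ _ (fun b a => R a b /\ reachable N2 m2 b /\ reachable N1 m1 a)).
  by move=> b a; split=> -[? [? ?]].
exact: wsim_reach.
Qed.

Lemma transfer_run (Tr : eqType) (P1 P2 : finType) (obs : pred Tr) (N1 : net Tr P1) (N2 : net Tr P2) R :
  (forall M M', tau_steps obs N1 M M' -> M' = M) ->
  wsim obs N2 N1 (fun b a => R a b) ->
  forall s c c', fires N2 c s c' -> forall a, R a c ->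
  exists a', R a' c' /\ fires N1 a [seq t <- s | obs t] a'.
Proof.
move=> htau W; elim=> [|t s IH] c c' /=.
  by move=> -> a Ra; exists a.
move=> [c1 [st f]] a Ra; have [W1 W2] := W c a Ra t c1 st.
case: (boolP (obs t)) => o.
  have [A [B [a1 [t1 [t2 [t3 r]]]]]] := W1 o.
  rewrite (htau _ _ t1) in t2; rewrite (htau _ _ t3) in r.
  have [a' [r' f']] := IH _ _ f _ r.
  by exists a'; split=> //=; exists B.
have [a1 [t1 r]] := W2 o; rewrite (htau _ _ t1) in r.
exact: IH _ _ f _ r.
Qed.

Lemma NH_L (Tr : eqType) (P : finType) (N : net Tr P) L H t :
  two_level N L H -> t \in trans (restrict N H) -> t \in L.
Proof.
move=> [e _]; rewrite /= mem_filter => /andP [nH tN].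
by move: tN; rewrite e (negbTE nH) orbF.
Qed.

Lemma stepNH_L (Tr : eqType) (P : finType) (N : net Tr P) L H M t M' :
  two_level N L H -> step (restrict N H) M t M' -> t \in L.
Proof. by move=> tl [/andP [tN _] _]; apply: NH_L tl tN. Qed.

Lemma tauNH (Tr : eqType) (P : finType) (N : net Tr P) L H M M' :
  two_level N L H -> tau_steps (mem L) (restrict N H) M M' -> M' = M.
Proof.
move=> tl [[|t s] [/= a f]] //.
move: a f => /andP [nL _] [M1 [st _]].
by move: (stepNH_L tl st); rewrite (negbTE nL).
Qed.

Definition sbis (Tr : eqType) (P : finType) (N : net Tr P) (L H : seq Tr) x y :=
  exists Q, Q x y /\ wsim (mem L) (restrict N H) (restrict N H) Q /\
    wsim (mem L) (restrict N H) (restrict N H) (fun b a => Q a b).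

Lemma sbis_transfer (Tr : eqType) (P : finType) (N : net Tr P) L H x y t x' :
  two_level N L H -> sbis N L H x y -> step (restrict N H) x t x' ->
  exists y', step (restrict N H) y t y' /\ sbis N L H x' y'.
Proof.
move=> tl [Q [Qxy [W1 W2]]] st.
have [A [B [y' [t1 [t2 [t3 r]]]]]] := (W1 x y Qxy t x' st).1 (stepNH_L tl st).
rewrite (tauNH tl t1) in t2; rewrite (tauNH tl t3) in r.
by exists B; split=> //; exists Q.
Qed.

Lemma sbis_sym (Tr : eqType) (P : finType) (N : net Tr P) L H x y :
  sbis N L H x y -> sbis N L H y x.
Proof. by move=> [Q [q [W1 W2]]]; exists (fun b a => Q a b). Qed.

Lemma mk_sbis (Tr : eqType) (P : finType) (N : net Tr P) L H (Q : marking P -> marking P -> Prop) x y :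
  two_level N L H ->
  (forall a b, Q a b -> forall t a', step (restrict N H) a t a' ->
     exists b', step (restrict N H) b t b' /\ Q a' b') ->
  (forall a b, Q a b -> forall t b', step (restrict N H) b t b' ->
     exists a', step (restrict N H) a t a' /\ Q a' b') ->
  Q x y -> sbis N L H x y.
Proof.
move=> tl F1 F2 q; exists Q; split=> //; split.
  move=> a b Qab t a' st; have tL := stepNH_L tl st; split; last by rewrite /= tL.
  move=> _; have [b' [st' q']] := F1 a b Qab t a' st.
  by exists b, b', b'; split; [exists [::]|split; [|split; [exists [::]|]]].
move=> b a Qab t b' st; have tL := stepNH_L tl st; split; last by rewrite /= tL.
move=> _; have [a' [st' q']] := F2 a b Qab t b' st.
by exists a, a', a'; split; [exists [::]|split; [|split; [exists [::]|]]].
Qed.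

Lemma sbis_refl (Tr : eqType) (P : finType) (N : net Tr P) L H x :
  two_level N L H -> sbis N L H x x.
Proof.
move=> tl; apply: (@mk_sbis _ _ _ _ _ (fun a b => a = b)) => //.
  by move=> a b -> t a' st; exists a'.
by move=> a b -> t b' st; exists b'.
Qed.

Lemma sbis_trans (Tr : eqType) (P : finType) (N : net Tr P) L H x y z :
  two_level N L H -> sbis N L H x y -> sbis N L H y z -> sbis N L H x z.
Proof.
move=> tl s1 s2.
apply: (@mk_sbis _ _ _ _ _ (fun a c => exists b, sbis N L H a b /\ sbis N L H b c)) => //.
- move=> a c [b [sab sbc]] t a' st.
  have [b' [st1 s1']] := sbis_transfer tl sab st.
  have [c' [st2 s2']] := sbis_transfer tl sbc st1.
  by exists c'; split=> //; exists b'.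
- move=> a c [b [sab sbc]] t c' st.
  have [b' [st1 s1']] := sbis_transfer tl (sbis_sym sbc) st.
  have [a' [st2 s2']] := sbis_transfer tl (sbis_sym sab) st1.
  by exists a'; split=> //; exists b'; split; apply: sbis_sym.
- by exists y.
Qed.

Lemma wbisim_sbis (Tr : eqType) (P : finType) (N : net Tr P) L H x y :
  wbisim (mem L) (restrict N H) x (restrict N H) y -> sbis N L H x y.
Proof. by move=> [R [r [_ [W1 W2]]]]; exists R. Qed.

Lemma sbis_wbisim (Tr : eqType) (P : finType) (N : net Tr P) L H x y :
  sbis N L H x y -> wbisim (mem L) (restrict N H) x (restrict N H) y.
Proof. by move=> [R [r [W1 W2]]]; apply: mk_wbisim r W1 W2. Qed.

Definition projL (P1 P2 : finType) (c : marking (P1 + P2)%type) : marking P1 :=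
  [ffun p => c (inl p)].

Lemma sbndc_bndc (Tr : eqType) (P : finType) (N : net Tr P) (M0 : marking P)
  (L H : seq Tr) :
  two_level N L H -> SBNDC N M0 L H -> BNDC N M0 L H.
Proof.
move=> tl S P' N' M0' hN'.
have tlL : forall t, t \in L -> t \notin H by case: tl.
apply: (@mk_wbisim _ _ _ _ _ _
  (fun M c => sbis N L H (projL c) M /\ reachable N M0 (projL c))).
- have -> : projL (compose_marking M0 M0') = M0 by apply/ffunP => p; rewrite !ffunE.
  by split; [apply: sbis_refl | exists [::]].
- move=> M c [Sx Rx] t M2 st.
  have tL := stepNH_L tl st.
  have tN : t \in trans N by case: st => /andP []; rewrite mem_filter => /andP [].
  have tN' : t \notin trans N' by apply/negP => /hN'; rewrite tL.
  have [x2 [st2 S2]] := sbis_transfer tl (sbis_sym Sx) st.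
  have E2 : x2 = projL (fire (compose N N') c t).
    case: st2 => _ ->; apply/ffunP => p; by rewrite !ffunE /= tN.
  have stC : step (restrict (compose N N') [seq t <- H | t \notin trans N']) c t
        (fire (compose N N') c t).
    split=> //; apply/andP; split.
      by rewrite /= !mem_filter (negbTE (tlL _ tL)) andbF /= mem_cat tN.
    case: st2 => /andP [_ /forallP en] _.
    apply/forallP => -[p|q] /=.
      by rewrite tN; move: (en p); rewrite ffunE.
    by rewrite (negbTE tN').
  have stN : step N (projL c) t x2.
    case: st2 => /andP [_ en] ->; split=> //; by rewrite /enabled tN en.
  split; last by rewrite /= tL.
  move=> _; exists c, (fire (compose N N') c t), (fire (compose N N') c t).
  split; first by exists [::].
  split=> //; split; first by exists [::].
  rewrite -E2; split; first exact: sbis_sym.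
  exact: reach_step Rx stN.
- move=> c M [Sx Rx] t c2 st.
  case: (st) => /andP [tC /forallP en] Ec2.
  have E2 : projL c2 = fire N (projL c) t ->
    True by [].
  case tN: (t \in trans N).
    have stN : step N (projL c) t (projL c2).
      split.
        rewrite /enabled tN /=; apply/forallP => p; move: (en (inl p)).
        by rewrite /= tN ffunE.
      by rewrite Ec2; apply/ffunP => p; rewrite !ffunE /= tN.
    case: (boolP (t \in L)) => tL.
      split; last by rewrite /= tL.
      move=> _.
      have stNH : step (restrict N H) (projL c) t (projL c2).
        case: stN => en' ->; split=> //; move: en' => /andP [_ en'].
        by rewrite /enabled en' andbT /= mem_filter (tlL _ tL) tN.
      have [M2' [st' S']] := sbis_transfer tl Sx stNH.
      exists M, M2', M2'; split; first by exists [::].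
      split=> //; split; first by exists [::].
      split=> //; exact: reach_step Rx stN.
    split; first by rewrite /= (negbTE tL).
    move=> _; exists M; split; first by exists [::].
    have tH : t \in H by move: tN; case: tl => e _; rewrite e (negbTE tL).
    have S12 := wbisim_sbis (S _ Rx t _ tH stN).
    split; last exact: reach_step Rx stN.
    exact: sbis_trans tl (sbis_sym S12) Sx.
  have tN' : t \in trans N'.
    by move: tC; rewrite /= mem_filter mem_cat tN => /andP [].
  have tL : t \notin L by apply: hN'.
  split; first by rewrite /= (negbTE tL).
  move=> _; exists M; split; first by exists [::].
  have -> : projL c2 = projL c.
    by rewrite Ec2; apply/ffunP => p; rewrite !ffunE /= tN subn0 addn0.
  by split.
Qed.

Definition bnet (Tr : eqType) (H : seq Tr) : net Tr unit :=
  Net H (fun _ _ => 1) (fun _ _ => 0).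

Definition cm (P : finType) (y : marking P) (b : nat) : marking (P + unit)%type :=
  compose_marking y [ffun _ : unit => b].

Definition Cn (Tr : eqType) (P : finType) (N : net Tr P) (H : seq Tr) :=
  restrict (compose N (bnet H)) [seq t <- H | t \notin trans (bnet H)].

Lemma memC (Tr : eqType) (P : finType) (N : net Tr P) L H t :
  two_level N L H -> (t \in trans (Cn N H)) = (t \in trans N).
Proof.
move=> [e _]; rewrite /= !mem_filter andNb /= mem_cat.
case hH: (t \in H); rewrite ?orbT ?orbF //.
by rewrite e hH orbT.
Qed.

Lemma fireC (Tr : eqType) (P : finType) (N : net Tr P) H t y b :
  t \in trans N -> fire (Cn N H) (cm y b) t = cm (fire N y t) (b - (t \in H)).
Proof.
move=> tN; apply/ffunP => -[p|[]]; rewrite !ffunE /= ?tN //.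
by case: (t \in H); rewrite /= addn0.
Qed.

Lemma enabledC (Tr : eqType) (P : finType) (N : net Tr P) L H t y b :
  two_level N L H -> enabled N y t -> (t \in H -> 0 < b) ->
  enabled (Cn N H) (cm y b) t.
Proof.
move=> tl /andP [tN /forallP en] hb.
rewrite /enabled (memC _ tl) tN /=; apply/forallP => -[p|[]] /=.
  by rewrite tN !ffunE.
by rewrite !ffunE; case: ifP => // /hb.
Qed.

Lemma enabledC_inv (Tr : eqType) (P : finType) (N : net Tr P) L H t y b :
  two_level N L H -> enabled (Cn N H) (cm y b) t ->
  [/\ t \in trans N, enabled N y t & (t \in H -> 0 < b)].
Proof.
move=> tl /andP [tC /forallP en]; rewrite (memC _ tl) in tC.
split=> //.
  rewrite /enabled tC; apply/forallP => p; move: (en (inl p)).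
  by rewrite /= tC !ffunE.
by move=> tH; move: (en (inr tt)); rewrite /= tH !ffunE.
Qed.

Lemma runC (Tr : eqType) (P : finType) (N : net Tr P) L H :
  two_level N L H -> forall s y y' b, fires N y s y' ->
  count (mem H) s <= b ->
  fires (Cn N H) (cm y b) s (cm y' (b - count (mem H) s)).
Proof.
move=> tl; elim=> [|t s IH] y y' b /=.
  by move=> ->; rewrite subn0.
move=> [y1 [[en ->] f]] hc.
have tN : t \in trans N by case/andP: en.
exists (cm (fire N y t) (b - (t \in H))); split.
  split; last by rewrite fireC.
  apply: enabledC tl en _ => tH; move: hc; rewrite tH; case: b => //.
rewrite subnDA; apply: IH f _.
by rewrite leq_subRL //; move: hc; case: (t \in H) => //=; case: b.
Qed.

Lemma tauC0 (Tr : eqType) (P : finType) (N : net Tr P) L H y A :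
  two_level N L H -> tau_steps (mem L) (Cn N H) (cm y 0) A -> A = cm y 0.
Proof.
move=> tl [[|t s] [/= a f]] //.
move: a f => /andP [nL _] [M1 [[en _] _]].
case: (enabledC_inv tl en) => tN _ hb.
have tH : t \in H by case: tl => e _; move: tN; rewrite e (negbTE nL).
by move: (hb tH).
Qed.

Lemma stepC0 (Tr : eqType) (P : finType) (N : net Tr P) L H y t B :
  two_level N L H -> step (Cn N H) (cm y 0) t B -> t \in L ->
  exists y', B = cm y' 0 /\ step (restrict N H) y t y'.
Proof.
move=> tl [en ->] tL.
case: (enabledC_inv tl en) => tN enN _.
exists (fire N y t); split; first by rewrite fireC.
split=> //; case/andP: enN => _ en'.
have tnH : t \notin H by case: tl => _ d; apply: d.
by rewrite /enabled en' andbT /= mem_filter tnH tN.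
Qed.

Lemma stepNH_C0 (Tr : eqType) (P : finType) (N : net Tr P) L H y t y' :
  two_level N L H -> step (restrict N H) y t y' -> step (Cn N H) (cm y 0) t (cm y' 0).
Proof.
move=> tl [/andP [tNH en] ->].
move: tNH; rewrite /= mem_filter => /andP [tnH tN].
split.
  by apply: enabledC tl _ _; [rewrite /enabled tN | rewrite (negbTE tnH)].
by rewrite fireC.
Qed.

Lemma half (Tr : eqType) (P : finType) (N : net Tr P) L H R1 R2 :
  two_level N L H ->
  wsim (mem L) (Cn N H) (restrict N H) (fun b a => R1 a b) ->
  wsim (mem L) (restrict N H) (Cn N H) R2 ->
  forall x y z t x', R1 z (cm x 0) -> R2 z (cm y 0) ->
  step (restrict N H) x t x' ->
  exists y' z', step (restrict N H) y t y' /\ R1 z' (cm x' 0) /\ R2 z' (cm y' 0).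
Proof.
move=> tl W1 W2 x y z t x' r1 r2 st.
have tL := stepNH_L tl st.
have stC := stepNH_C0 tl st.
have [A [B [z' [t1 [t2 [t3 r1']]]]]] := (W1 _ _ r1 t _ stC).1 tL.
rewrite (tauNH tl t1) in t2; rewrite (tauNH tl t3) in r1'.
have [A2 [B2 [c' [u1 [u2 [u3 r2']]]]]] := (W2 _ _ r2 t _ t2).1 tL.
rewrite (tauC0 tl u1) in u2.
have [y' [EB stNH]] := stepC0 tl u2 tL.
rewrite EB in u3; rewrite (tauC0 tl u3) in r2'.
by exists y', B.
Qed.

Lemma bndc_sbndc (Tr : eqType) (P : finType) (N : net Tr P) (M0 : marking P)
  (L H : seq Tr) :
  two_level N L H -> BNDC N M0 L H -> SBNDC N M0 L H.
Proof.
move=> tl B M1 [s fs] h M2 hH st.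
have hyp : forall t, t \in trans (bnet H) -> t \notin L.
  by move=> t /= tH; apply/negP => tL; case: tl => _ d; move: (d _ tL); rewrite tH.
set k := count (mem H) s.
have [R1 [R1i [_ [W1 W1']]]] := B unit (bnet H) [ffun _ => k] hyp.
have [R2 [R2i [_ [W2 W2']]]] := B unit (bnet H) [ffun _ => k.+1] hyp.
have htau : forall M M', tau_steps (mem L) (restrict N H) M M' -> M' = M.
  by move=> M M'; apply: tauNH tl.
have run1 := runC tl fs (leqnn k).
rewrite subnn in run1.
have fs2 : fires N M0 (s ++ [:: h]) M2 by apply: fires_cat fs _; exists M2.
have run2 := runC tl fs2 (_ : count (mem H) (s ++ [:: h]) <= k.+1).
rewrite count_cat /= hH addn0 addn1 subnn in run2.
have [z1 [r1 f1]] := transfer_run htau W1' run1 R1i.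
have [z2 [r2 f2]] := transfer_run htau W2' (run2 (leqnn _)) R2i.
have hnL : h \notin L by apply: hyp.
rewrite filter_cat /= (negbTE hnL) cats0 in f2.
rewrite (fires_det f1 f2) in r1.
apply: sbis_wbisim.
apply: (@mk_sbis _ _ _ _ _ (fun x y => exists z, R1 z (cm x 0) /\ R2 z (cm y 0))) => //.
- move=> x y [z [q1 q2]] t x' stx.
  have [y' [z' [sty [q1' q2']]]] := half tl W1' W2 q1 q2 stx.
  by exists y'; split=> //; exists z'.
- move=> x y [z [q1 q2]] t y' sty.
  have [x' [z' [stx [q2' q1']]]] := half tl W2' W1 q2 q1 sty.
  by exists x'; split=> //; exists z'.
- by exists z2.
Qed.

Theorem theorem1 (Tr : eqType) (P : finType) (N : net Tr P) (M0 : marking P)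
  (L H : seq Tr) :
  two_level N L H -> (BNDC N M0 L H <-> SBNDC N M0 L H).
Proof.
move=> tl; split; [exact: bndc_sbndc | exact: sbndc_bndc].
Qed.
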